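(* Let $G$ be a finite group and let $U_1,U_2\le G$ be almost conjugate. Suppose there exists a normal subgroup $N\trianglelefteq G$ containing both $U_1$ and $U_2$ as subgroups of index two. Then $U_1$ is conjugate to $U_2$ in $G$.
   Context: Two subgroups $U_1,U_2$ of a finite group $G$ are almost conjugate if for every conjugacy class $C$ of $G$ one has $|U_1\cap C|=|U_2\cap C|$. *)

(* Defs.v *)
From mathcomp Require Import all_boot all_fingroup.
Set Implicit Arguments.
Unset Strict Implicit.
Unset Printing Implicit Defensive.
Local Open Scope group_scope.

Definition almost_conjugate (gT : finGroupType) (G U1 U2 : {set gT}) : Prop :=
  forall C, C \in classes G -> #|U1 :&: C| = #|U2 :&: C|.

(* Main.v *)
Require Import Defs.
From mathcomp Require Import all_boot all_fingroup.
From mathcomp Require Import zify.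
Local Open Scope group_scope.
Lemma key (gT : finGroupType) (N V W : {group gT}) :
  V \subset N -> W \subset N -> (#|V| * 2 = #|N|)%N -> (#|W| * 2 = #|N|)%N ->
  V :!=: W -> #|V :&: W| = #|V :\: W|.
Proof.
move=> sVN sWN hV hW neVW.
have hID := cardsID W V.
have lo : (#|V| <= 2 * #|V :&: W|)%N.
  have e := mul_cardG V W.
  have le : #|V * W| <= #|N| by apply: subset_leq_card; apply: mul_subG.
  have Wp := cardG_gt0 W.
  have : (#|V| * #|W| <= #|W| * (2 * #|V :&: W|))%N.
    rewrite e mulnA [(#|W| * 2)%N]hW leq_mul2r le orbT //.
  rewrite mulnC leq_pmul2l //.
have up : (2 * #|V :&: W| <= #|V|)%N.
  have dv : #|V :&: W| %| #|V| by rewrite cardSg // subsetIl.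
  have lt : #|V :&: W| < #|V|.
    apply: proper_card; rewrite properEneq subsetIl andbT.
    apply/negP => /eqP e; move/negP: neVW; apply; rewrite eqEcard.
    have sVW : V \subset W by rewrite -e subsetIr.
    by rewrite sVW /= -(leq_pmul2r (isT : 0 < 2)%N) hV hW.
  case/dvdnP: dv => k hk.
  have Ip := cardG_gt0 (V :&: W)%G.
  have k2 : (1 < k)%N.
    case: k hk => [|[|k]] hk; last by [].
    - by rewrite hk mul0n in lt.
    - by rewrite hk mul1n ltnn in lt.
  by rewrite hk leq_mul2r k2 orbT.
lia.
Qed.
Definition Fc (gT : finGroupType) (G S : {set gT}) (y : gT) : nat :=
  \sum_(g in G) nat_of_bool ((y ^ g)%g \in S).

Arguments Fc {gT}.

Lemma card_sum (T : finType) (U A : {set T}) :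
  #|U :&: A| = \sum_(y in U) nat_of_bool (y \in A).
Proof.
rewrite -sum1_card (eq_bigl (fun y => (y \in U) && (y \in A))); last first.
  by move=> y; rewrite in_setI.
by rewrite big_mkcondr; apply: eq_bigr => y _; case: (y \in A).
Qed.

Lemma exch (gT : finGroupType) (G : {group gT}) (U S : {set gT}) :
  \sum_(g in G) #|U :^ g :&: S| = \sum_(y in U) Fc G S y.
Proof.
rewrite /Fc exchange_big /=; apply: eq_bigr => g _.
rewrite -(cardJg _ g^-1) conjIg conjsgK card_sum.
by apply: eq_bigr => y _; rewrite mem_conjgV.
Qed.

Lemma Fc_class (gT : finGroupType) (G : {group gT}) (S : {set gT}) y h :
  h \in G -> Fc G S (y ^ h) = Fc G S y.
Proof.
move=> Gh; rewrite /Fc (reindex_inj (mulgI h^-1)) /=.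
apply: eq_big => g; first by rewrite groupMl // groupV.
move=> _; rewrite -!conjgM mulgA mulgV mul1g //.
Qed.
Lemma class_split (gT : finGroupType) (G : {group gT}) (U S : {set gT}) :
  U \subset G ->
  \sum_(y in U) Fc G S y =
  \sum_(C in classes G) (#|U :&: C| * Fc G S (repr C))%N.
Proof.
move=> sUG.
rewrite (eq_bigl (fun y => (y \in G) && (y \in U))); last first.
  by move=> y /=; case yU: (y \in U); rewrite ?andbT ?andbF // (subsetP sUG).
rewrite big_mkcondr.
have /and3P[/eqP cov tI _] := classes_partition G.
rewrite -{1}cov big_trivIset //=.
apply: eq_bigr => C /imsetP[x0 Gx0 ->].
have rC : repr (x0 ^: G) \in x0 ^: G by apply: mem_repr (class_refl G x0).
case/imsetP: rC => k Gk ->.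
rewrite Fc_class //.
rewrite -sum_nat_const [RHS]big_mkcond /= [LHS]big_mkcond /=.
apply: eq_bigr => x _.
rewrite in_setI; case xC: (x \in x0 ^: G); rewrite ?andbF ?andbT //.
case: (x \in U) => //.
by case/imsetP: xC => h Gh ->; rewrite Fc_class.
Qed.

Lemma class_eq (gT : finGroupType) (G U1 U2 : {group gT}) (S : {set gT}) :
  U1 \subset G -> U2 \subset G -> almost_conjugate G U1 U2 ->
  \sum_(y in U1) Fc G S y = \sum_(y in U2) Fc G S y.
Proof.
move=> s1 s2 ac; rewrite !class_split //.
by apply: eq_bigr => C CG; rewrite ac.
Qed.

Theorem proposition5p7 (gT : finGroupType) (G N U1 U2 : {group gT}) :
  U1 \subset G -> U2 \subset G ->
  almost_conjugate G U1 U2 ->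
  N <| G -> U1 \subset N -> U2 \subset N ->
  #|N : U1| = 2 -> #|N : U2| = 2 ->
  exists2 g, g \in G & U2 :=: U1 :^ g.
Proof.
move=> s1G s2G ac nNG s1N s2N i1 i2.
case: (boolP [exists g in G, U2 :==: U1 :^ g]) => [/exists_inP[g Gg /eqP e]|none].
  by exists g.
exfalso.
have c1 : (#|U1| * 2 = #|N|)%N by rewrite -i1 Lagrange.
have c2 : (#|U2| * 2 = #|N|)%N by rewrite -i2 Lagrange.
have sJ : forall (U : {group gT}) g, g \in G -> U \subset N -> U :^ g \subset N.
  move=> U g Gg sUN.
  by rewrite -(normP (subsetP (normal_norm nNG) g Gg)) conjSg.
have eA := @class_eq _ _ _ _ U2 s1G s2G ac.
have eB := @class_eq _ _ _ _ (~: U2) s1G s2G ac.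
rewrite -!exch in eA eB.
have A1 : \sum_(g in G) #|U1 :^ g :&: U2| = \sum_(g in G) #|U1 :^ g :&: ~: U2|.
  apply: eq_bigr => g Gg; rewrite -setDE.
  apply: (@key _ N (U1 :^ g)%G U2) => //=.
  - exact: sJ.
  - by rewrite cardJg.
  - apply/negP => /eqP e; move/negP: none; apply.
    by apply/exists_inP; exists g; rewrite // e.
have B1 : \sum_(g in G) #|U2 :^ g :&: ~: U2| < \sum_(g in G) #|U2 :^ g :&: U2|.
  rewrite (bigD1 1) //= [X in _ < X](bigD1 1) //= !conjsg1 setICr cards0 add0n.
  rewrite setIid.
  apply: (@leq_trans (#|U2| + \sum_(i in G | i != 1) #|U2 :^ i :&: ~: U2|)).
    by rewrite -[X in X < _]add0n ltn_add2r cardG_gt0.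
  rewrite leq_add2l; apply: leq_sum => g /andP[Gg _].
  case: (eqVneq (U2 :^ g) U2) => [->|ne].
    by rewrite setICr cards0.
  rewrite -setDE -(@key _ N (U2 :^ g)%G U2) //=.
  - exact: sJ.
  - by rewrite cardJg.
lia.
Qed.
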